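(* Let $X$ be a Baire space, $Y$ a topological space, $(Z,d)$ a metric space and $f:X\times Y\to Z$ a mapping. Let $b\in Y$ have a countable neighborhood base in $Y$. Suppose $f^y$ is quasicontinuous for every $y\in Y$, and $f_x$ is continuous at $b$ for every $x$ in a given dense Baire subspace $Q$ of $X$. Then: (1) $f$ is quasicontinuous with respect to the variable $y$ at each point of $X\times\{b\}$; (2) the set of all $x\in X$ such that $f$ is continuous at $(x,b)$ is residual in $X$.
   Context: $f_x(y)=f^y(x)=f(x,y)$. A mapping $g:X\to Z$ is quasicontinuous at $a$ if for each neighborhood $U$ of $a$ and neighborhood $W$ of $g(a)$ there is an open $O$ with $\emptyset\ne O\subset U$ and $g(O)\subset W$; quasicontinuous means at every point. $f$ is quasicontinuous with respect to the variable $y$ at $(a,b)$ if for each neighborhood $U$ of $a$ in $X$ and each $\varepsilon>0$ there are a neighborhood $V$ of $b$ in $Y$ and an open $O\subset X$ with $\emptyset\ne O\subset U$ such that $d(f(a,b),f(x,y))\le\varepsilon$ for all $x\in O$, $y\in V$. Residual means containing a countable intersection of dense open sets. *)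

(* Defs.v *)
From Stdlib Require Import Reals.
Open Scope R_scope.

Set Implicit Arguments.

Record topology (T : Type) := Topology {
  open : (T -> Prop) -> Prop;
  open_full : open (fun _ => True);
  open_inter : forall U V, open U -> open V -> open (fun x => U x /\ V x);
  open_union : forall F : (T -> Prop) -> Prop,
      (forall U, F U -> open U) -> open (fun x => exists U, F U /\ U x)
}.

Definition nbhd {T} (t : topology T) (a : T) (N : T -> Prop) : Prop :=
  exists U, open t U /\ U a /\ forall x, U x -> N x.

Definition dense {T} (t : topology T) (D : T -> Prop) : Prop :=
  forall U, open t U -> (exists x, U x) -> exists x, U x /\ D x.

Definition baire {T} (t : topology T) : Prop :=
  forall G : nat -> T -> Prop,
    (forall n, open t (G n)) -> (forall n, dense t (G n)) ->
    dense t (fun x => forall n, G n x).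

Definition residual {T} (t : topology T) (S : T -> Prop) : Prop :=
  exists G : nat -> T -> Prop,
    (forall n, open t (G n)) /\ (forall n, dense t (G n)) /\
    (forall x, (forall n, G n x) -> S x).

Definition countable_nbhd_base {T} (t : topology T) (b : T) : Prop :=
  exists B : nat -> T -> Prop,
    (forall n, nbhd t b (B n)) /\
    (forall N, nbhd t b N -> exists n, forall y, B n y -> N y).

Section Subspace.
Variables (T : Type) (t : topology T) (Q : T -> Prop).

Definition sub_open (S : {x | Q x} -> Prop) : Prop :=
  exists U, open t U /\ forall z, S z <-> U (proj1_sig z).

Lemma sub_open_full : sub_open (fun _ => True).
Proof. exists (fun _ => True); split; [apply open_full | tauto]. Qed.

Lemma sub_open_inter : forall U V, sub_open U -> sub_open V ->
  sub_open (fun x => U x /\ V x).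
Proof.
  intros U V [U' [HU' EU]] [V' [HV' EV]].
  exists (fun x => U' x /\ V' x); split; [apply open_inter; assumption|].
  intro z; rewrite EU, EV; tauto.
Qed.

Lemma sub_open_union : forall F : ({x | Q x} -> Prop) -> Prop,
  (forall U, F U -> sub_open U) -> sub_open (fun x => exists U, F U /\ U x).
Proof.
  intros F HF.
  exists (fun y => exists U, (open t U /\
            (forall z : {x | Q x}, U (proj1_sig z) -> exists S, F S /\ S z)) /\ U y).
  split.
  - apply open_union. intros U [H _]; exact H.
  - intro z; split.
    + intros [S [FS Sz]]. destruct (HF S FS) as [U [HU EU]].
      exists U; split; [split; [exact HU|] | apply EU; exact Sz].
      intros w Uw; exists S; split; [exact FS | apply EU; exact Uw].
    + intros [U [[_ HU] Uz]]. exact (HU z Uz).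
Qed.

Definition subspace : topology {x | Q x} :=
  Topology sub_open sub_open_full sub_open_inter sub_open_union.
End Subspace.

Record metric (Z : Type) := Metric {
  dist : Z -> Z -> R;
  dist_nonneg : forall x y, 0 <= dist x y;
  dist_eq0 : forall x y, dist x y = 0 <-> x = y;
  dist_sym : forall x y, dist x y = dist y x;
  dist_tri : forall x y z, dist x z <= dist x y + dist y z
}.

Definition mnbhd {Z} (m : metric Z) (z : Z) (W : Z -> Prop) : Prop :=
  exists eps, 0 < eps /\ forall w, dist m z w < eps -> W w.

Definition quasicontinuous_at {X Z} (tX : topology X) (m : metric Z)
    (g : X -> Z) (a : X) : Prop :=
  forall U W, nbhd tX a U -> mnbhd m (g a) W ->
    exists O, open tX O /\ (exists x, O x) /\
      (forall x, O x -> U x) /\ (forall x, O x -> W (g x)).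

Definition quasicontinuous {X Z} (tX : topology X) (m : metric Z)
    (g : X -> Z) : Prop :=
  forall a, quasicontinuous_at tX m g a.

Definition continuous_at {Y Z} (tY : topology Y) (m : metric Z)
    (h : Y -> Z) (b : Y) : Prop :=
  forall W, mnbhd m (h b) W ->
    exists V, nbhd tY b V /\ forall y, V y -> W (h y).

Definition continuous_at2 {X Y Z} (tX : topology X) (tY : topology Y)
    (m : metric Z) (f : X -> Y -> Z) (a : X) (b : Y) : Prop :=
  forall W, mnbhd m (f a b) W ->
    exists U V, nbhd tX a U /\ nbhd tY b V /\
      forall x y, U x -> V y -> W (f x y).

Definition quasicontinuous_wrt_y {X Y Z} (tX : topology X) (tY : topology Y)
    (m : metric Z) (f : X -> Y -> Z) (a : X) (b : Y) : Prop :=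
  forall U eps, nbhd tX a U -> 0 < eps ->
    exists V O, nbhd tY b V /\ open tX O /\ (exists x, O x) /\
      (forall x, O x -> U x) /\
      (forall x y, O x -> V y -> dist m (f a b) (f x y) <= eps).

(* Main.v *)
Require Import Defs.
From Stdlib Require Import Reals Lra Lia Classical.
Open Scope R_scope.

Lemma part1 (X Y Z : Type) (tX : topology X) (tY : topology Y)
  (m : metric Z) (f : X -> Y -> Z) (b : Y) (Q : X -> Prop) :
  countable_nbhd_base tY b ->
  (forall y, quasicontinuous tX m (fun x => f x y)) ->
  dense tX Q ->
  baire (subspace tX Q) ->
  (forall x, Q x -> continuous_at tY m (f x) b) ->
  forall a, quasicontinuous_wrt_y tX tY m f a b.
Proof.
  intros [B [HBn HB]] Hq HQ HBQ Hc a U eps HU Heps.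
  set (e := eps / 3).
  assert (He : 0 < e) by (unfold e; lra).
  destruct (Hq b a U (fun z => Defs.dist m (f a b) z < e) HU) as
    [O1 [HO1 [[x1 Hx1] [HO1U HO1e]]]].
  { exists e; split; [exact He | intros; assumption]. }
  simpl in HO1e.
  set (A := fun n x => Q x /\ O1 x /\ forall y, B n y -> Defs.dist m (f x b) (f x y) <= e).
  assert (Hcov : forall x, Q x -> O1 x -> exists n, A n x).
  { intros x Qx O1x.
    destruct (Hc x Qx (fun z => Defs.dist m (f x b) z < e)) as [V [HV HVe]].
    { exists e; split; [exact He | intros; assumption]. }
    destruct (HB V HV) as [n Hn].
    exists n; unfold A; repeat split; try assumption.
    intros y By; left; apply HVe, Hn, By. }
  destruct (classic (exists n G, open tX G /\ (exists x, G x) /\ (forall x, G x -> O1 x) /\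
     (forall O', open tX O' -> (forall x, O' x -> G x) -> (exists x, O' x) ->
        exists x, O' x /\ A n x))) as [HP | HnP].
  - destruct HP as [n [G [HG [HGne [HGO1 HGd]]]]].
    exists (B n), G; split; [apply HBn|]; split; [exact HG|]; split; [exact HGne|].
    split; [intros x Gx; apply HO1U, HGO1, Gx|].
    intros x y Gx By.
    destruct (Hq y x G (fun z => Defs.dist m (f x y) z < e)) as
      [O' [HO' [HO'ne [HO'G HO'e]]]].
    { exists G; split; [exact HG | split; [exact Gx | auto]]. }
    { exists e; split; [exact He | intros; assumption]. }
    simpl in HO'e.
    destruct (HGd O' HO' HO'G HO'ne) as [x' [O'x' [Qx' [O1x' Hx']]]].
    pose proof (HO1e x' O1x') as h1.
    pose proof (Hx' y By) as h2.
    pose proof (HO'e x' O'x') as h3.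
    rewrite Defs.dist_sym in h3.
    pose proof (Defs.dist_tri m (f a b) (f x' b) (f x y)) as t1.
    pose proof (Defs.dist_tri m (f x' b) (f x' y) (f x y)) as t2.
    unfold e in *; lra.
  - exfalso.
    set (Gs := fun n (z : {x | Q x}) => exists O', open tX O' /\ O' (proj1_sig z) /\
                 forall x, O' x -> A n x -> False).
    assert (HGo : forall n, open (subspace tX Q) (Gs n)).
    { intro n. simpl. unfold sub_open.
      exists (fun x => exists O', (open tX O' /\ forall x, O' x -> A n x -> False) /\ O' x).
      split.
      - apply open_union. intros O' [H _]; exact H.
      - intro z; unfold Gs; split.
        + intros [O' [h1 [h2 h3]]]; exists O'; tauto.
        + intros [O' [[h1 h3] h2]]; exists O'; tauto. }
    assert (HGd : forall n, dense (subspace tX Q) (Gs n)).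
    { intros n S HS [z0 Sz0]. simpl in HS. destruct HS as [U0 [HU0 EU0]].
      pose proof (proj1 (EU0 z0) Sz0) as U0z0.
      destruct (classic (exists x, U0 x /\ O1 x)) as [Hne | Hemp].
      - apply NNPP; intro H.
        apply HnP. exists n, (fun x => U0 x /\ O1 x).
        split; [apply open_inter; assumption|].
        split; [exact Hne|]. split; [intros x [_ h]; exact h|].
        intros O' HO' HO'G [x2 Hx2].
        apply NNPP; intro H2.
        destruct (HQ O' HO' (ex_intro _ x2 Hx2)) as [x3 [O'x3 Qx3]].
        apply H. exists (exist _ x3 Qx3). split.
        + apply EU0. simpl. apply (HO'G x3 O'x3).
        + exists O'. split; [exact HO'|]. split; [exact O'x3|].
          intros x O'x Ax. apply H2. exists x; tauto.
      - exists z0. split; [exact Sz0|].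
        exists U0. split; [exact HU0|]. split; [exact U0z0|].
        intros x U0x [_ [O1x _]]. apply Hemp. exists x; tauto. }
    destruct (HBQ Gs HGo HGd (fun z => O1 (proj1_sig z))) as [z [O1z Hz]].
    + simpl. exists O1. split; [exact HO1|]. tauto.
    + destruct (HQ O1 HO1 (ex_intro _ x1 Hx1)) as [x2 [O1x2 Qx2]].
      exists (exist _ x2 Qx2). exact O1x2.
    + destruct (Hcov (proj1_sig z) (proj2_sig z) O1z) as [n An].
      destruct (Hz n) as [O' [_ [O'z Hd]]].
      exact (Hd _ O'z An).
Qed.

Theorem theorem4p4 (X Y Z : Type) (tX : topology X) (tY : topology Y)
  (m : metric Z) (f : X -> Y -> Z) (b : Y) (Q : X -> Prop) :
  baire tX ->
  countable_nbhd_base tY b ->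
  (forall y, quasicontinuous tX m (fun x => f x y)) ->
  dense tX Q ->
  baire (subspace tX Q) ->
  (forall x, Q x -> continuous_at tY m (f x) b) ->
  (forall a, quasicontinuous_wrt_y tX tY m f a b) /\
  residual tX (fun x => continuous_at2 tX tY m f x b).
Proof.
  intros _ HB Hq HQ HBQ Hc.
  pose proof (@part1 X Y Z tX tY m f b Q HB Hq HQ HBQ Hc) as P1.
  split; [exact P1|].
  set (r := fun k : nat => / INR (S k)).
  assert (Hr : forall k, 0 < r k).
  { intro k; unfold r; apply Rinv_0_lt_compat, lt_0_INR; lia. }
  exists (fun k x => exists O, (open tX O /\ exists V, nbhd tY b V /\
     forall x1 x2 y1 y2, O x1 -> O x2 -> V y1 -> V y2 ->
       Defs.dist m (f x1 y1) (f x2 y2) <= r k) /\ O x).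
  split; [|split].
  - intro k. apply open_union. intros O [h _]; exact h.
  - intros k U HU [x0 Ux0].
    destruct (P1 x0 U (r k / 2)) as [V [O [HV [HO [[x1 Ox1] [HOU Hd]]]]]].
    + exists U; split; [exact HU|split; [exact Ux0| auto]].
    + pose proof (Hr k); lra.
    + exists x1. split; [apply HOU, Ox1|].
      exists O. split; [|exact Ox1]. split; [exact HO|].
      exists V. split; [exact HV|].
      intros a1 a2 y1 y2 O1 O2 V1 V2.
      pose proof (Hd a1 y1 O1 V1) as h1. pose proof (Hd a2 y2 O2 V2) as h2.
      rewrite Defs.dist_sym in h1.
      pose proof (Defs.dist_tri m (f a1 y1) (f x0 b) (f a2 y2)). lra.
  - intros x Hx W [eps [Heps HW]].
    destruct (archimed_cor1 eps Heps) as [N [HN HN0]].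
    destruct N as [|k]; [lia|].
    destruct (Hx k) as [O [[HO [V [HV Hd]]] Ox]].
    exists O, V. split; [exists O; split; [exact HO|split; [exact Ox|auto]]|].
    split; [exact HV|].
    intros x' y O' Vy. apply HW.
    assert (Vb : V b) by (destruct HV as [U' [_ [U'b H']]]; auto).
    pose proof (Hd x x' b y Ox O' Vb Vy). unfold r in *. lra.
Qed.
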